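(* Let $n\ge1$, $P>0$, $b>0$ and fixed parameters $\widetilde\alpha_r>0$, $r=1,\dots,n$. For $\boldsymbol{\alpha}\in\mathcal{A}:=\{\boldsymbol{\alpha}: 0<\alpha_r\le b,\ r=1,\dots,n\}$ let $$(x_1^*(\boldsymbol{\alpha}),\dots,x_n^*(\boldsymbol{\alpha}))=\arg\max_{x_r>0,\ \sum_{r=1}^n x_r\le P}\ \sum_{r=1}^n\frac{x_r^{1-\alpha_r}}{1-\alpha_r},\qquad \Psi(\boldsymbol{\alpha})=\sum_{r=1}^n\frac{x_r^*(\boldsymbol{\alpha})^{1-\widetilde\alpha_r}}{1-\widetilde\alpha_r}.$$ Let $\boldsymbol{\alpha}^*\in\arg\max_{\boldsymbol{\alpha}\in\mathcal{A}}\Psi(\boldsymbol{\alpha})$ be any solution. Then $(x_1^*(\boldsymbol{\alpha}^* ),\dots,x_n^*(\boldsymbol{\alpha}^* ))$ is a solution of $$\max_{x_1,\dots,x_n}\ \sum_{r=1}^n\frac{x_r^{1-\widetilde\alpha_r}}{1-\widetilde\alpha_r}\quad\text{subject to}\quad \sum_{r=1}^nx_r\le P,\ x_r>0,\ r=1,\dots,n.$$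
   Context: This is a single-link network shared by $n$ users with link capacity $P$; the upper-level true utilities are $\alpha$-fairness functions with parameters $\widetilde\alpha_r$, and the lower level allocates rates using $\alpha$-fairness surrogate utilities with tunable parameters $\alpha_r$. *)

(* Defs.v *)
From mathcomp Require Import all_boot all_order all_algebra.
From mathcomp Require Import all_classical all_reals all_analysis.
Set Implicit Arguments. Unset Strict Implicit. Unset Printing Implicit Defensive.
Import Order.TTheory GRing.Theory Num.Theory.
Local Open Scope ring_scope.

Definition alpha_util {R : realType} (a x : R) : R :=
  if a == 1 then ln x else x `^ (1 - a) / (1 - a).

Definition total_util {R : realType} {n : nat} (a x : 'I_n -> R) : R :=
  \sum_(r < n) alpha_util (a r) (x r).

Definition feasible {R : realType} {n : nat} (P : R) (x : 'I_n -> R) : Prop :=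
  (forall r, 0 < x r) /\ \sum_(r < n) x r <= P.

Definition is_opt_alloc {R : realType} {n : nat} (P : R) (a x : 'I_n -> R) : Prop :=
  feasible P x /\ forall y, feasible P y -> total_util a y <= total_util a x.

Definition param_set {R : realType} {n : nat} (b : R) (a : 'I_n -> R) : Prop :=
  forall r, 0 < a r <= b.

(* Main.v *)
Require Import Defs.
From mathcomp Require Import all_boot all_order all_algebra.
From mathcomp Require Import all_classical all_reals all_analysis.
Import Order.TTheory GRing.Theory Num.Theory.
Import numFieldNormedType.Exports.
Local Open Scope classical_set_scope.
Local Open Scope ring_scope.

Lemma util_derive {R : realType} (a c : R) : 0 < c ->
  is_derive c 1 (alpha_util a) (c `^ (- a)).
Proof.
move=> c0; have [->|a1] := eqVneq a 1.
  have -> : alpha_util 1 = @ln R.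
    by apply/funext => x; rewrite /alpha_util eqxx.
  by rewrite powR_inv1 ?ltW//; exact: is_derive1_ln.
have -> : alpha_util a = (1 - a)^-1 \*: ((@powR R) ^~ (1 - a)).
  by apply/funext => x; rewrite /alpha_util (negbTE a1) /= mulrC.
have h : (1 - a) != 0 by rewrite subr_eq0 eq_sym.
apply: is_derive_eq; first exact: is_deriveZ (is_derive1_powR _ c0).
by change ((1-a)^-1 * ((1-a) * c `^ (1-a-1)) = c `^ (- a)); rewrite mulrA mulVf // mul1r addrAC subrr add0r.
Qed.

Lemma util_cont {R : realType} (a x y : R) : 0 < x ->
  {within [set` `[x, y]], continuous (alpha_util a)}.
Proof.
move=> x0; apply: derivable_within_continuous => z; rewrite in_itv /= => /andP[xz _].
by have [] := util_derive a z (lt_le_trans x0 xz).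
Qed.

Lemma tangent_lt {R : realType} (a x y : R) : 0 < a -> 0 < x -> 0 < y -> x != y ->
  alpha_util a y - alpha_util a x < x `^ (- a) * (y - x).
Proof.
move=> a0 x0 y0 xy.
have dec : forall u v : R, 0 < u -> u < v -> v `^ (- a) < u `^ (- a).
  move=> u v u0 uv; rewrite !powRN ltf_pV2 ?posrE ?powR_gt0 //; last exact: lt_trans uv.
  by apply: gt0_ltr_powR => //; rewrite nnegrE ltW // (lt_trans u0).
have [xy'|yx] := ltP x y.
  have hd : forall c, c \in `]x, y[ -> is_derive c 1 (alpha_util a) (c `^ (- a)).
    move=> c; rewrite in_itv /= => /andP[xc _]; exact: util_derive (lt_trans x0 xc).
  have [c cI ->] := @MVT R (alpha_util a) (fun c => c `^ (- a)) x y xy' hd (util_cont a x y x0).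
  move: cI; rewrite in_itv /= => /andP[xc cy].
  by rewrite ltr_pM2r ?subr_gt0 //; apply: dec.
have yx' : y < x by rewrite lt_neqAle yx eq_sym xy.
have hd : forall c, c \in `]y, x[ -> is_derive c 1 (alpha_util a) (c `^ (- a)).
  move=> c; rewrite in_itv /= => /andP[yc _]; exact: util_derive (lt_trans y0 yc).
have [c cI h] := @MVT R (alpha_util a) (fun c => c `^ (- a)) y x yx' hd (util_cont a y x y0).
rewrite -opprB h -[y - x]opprB mulrN ltrN2.
move: cI; rewrite in_itv /= => /andP[yc cx].
by rewrite ltr_pM2r ?subr_gt0 //; apply: dec (lt_trans y0 yc) cx.
Qed.

Lemma exists_root {R : realType} (n : nat) (c : 'I_n -> R) (P : R) :
  (0 < n)%N -> 0 < P -> (forall r, 0 < c r) ->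
  exists2 s, 0 < s & \sum_(r < n) s `^ c r = P.
Proof.
move=> n0 P0 c0.
pose h := fun (i : 'I_n) (s : R) => s `^ c i.
pose f := \sum_(i < n) h i.
have fE : forall s, f s = \sum_(r < n) s `^ c r by move=> s; rewrite /f fct_sumE.
pose d := fun r : 'I_n => (P / n%:R) `^ (c r)^-1.
have d0 : forall r, 0 < d r.
  by move=> r; apply: powR_gt0; rewrite divr_gt0 // ltr0n.
pose s1 := (\sum_(r < n) (d r)^-1)^-1.
pose s2 := \sum_(r < n) P `^ (c r)^-1.
pose r0 : 'I_n := Ordinal n0.
have sum_pos : 0 < \sum_(r < n) (d r)^-1.
  rewrite (bigD1 r0) //= ltr_pwDl ?invr_gt0 //.
  by apply: sumr_ge0 => i _; rewrite invr_ge0 ltW.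
have s10 : 0 < s1 by rewrite invr_gt0.
have s1d : forall r, s1 <= d r.
  move=> r; rewrite -[d r]invrK lef_pV2 ?posrE ?invr_gt0 //.
  rewrite (bigD1 r) //= lerDl.
  by apply: sumr_ge0 => i _; rewrite invr_ge0 ltW.
have Pn : P / n%:R <= P.
  rewrite ler_pdivrMr ?ltr0n // ler_peMr ?(ltW P0) //.
  by rewrite ler1n.
have s12 : s1 <= s2.
  apply: (le_trans (s1d r0)); apply: (@le_trans _ _ (P `^ (c r0)^-1)).
    apply: ge0_ler_powR => //; [by rewrite invr_ge0 ltW | by rewrite nnegrE divr_ge0 ?ler0n ?ltW | by rewrite nnegrE ltW].
  by rewrite /s2 (bigD1 r0) //= lerDl; apply: sumr_ge0 => i _; apply: powR_ge0.
have fs1 : f s1 <= P.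
  rewrite fE; apply: (@le_trans _ _ (\sum_(r < n) (P / n%:R))).
    apply: ler_sum => r _.
    have -> : P / n%:R = d r `^ c r.
      by rewrite /d -powRrM mulVf ?gt_eqF // powRr1 // divr_ge0 ?ler0n ?ltW.
    by apply: ge0_ler_powR; rewrite ?nnegrE ?s1d // ltW.
  by rewrite sumr_const card_ord -(mulr_natr (P / n%:R)) divfK // pnatr_eq0 -lt0n.
have fs2 : P <= f s2.
  rewrite fE (bigD1 r0) //=; apply: ler_wpDr; first by apply: sumr_ge0 => i _; apply: powR_ge0.
  have -> : P = (P `^ (c r0)^-1) `^ c r0.
    by rewrite -powRrM mulVf ?gt_eqF // powRr1 // ltW.
  have hs2 : P `^ (c r0)^-1 <= s2.
    by rewrite /s2 (bigD1 r0) //= lerDl; apply: sumr_ge0 => i _; apply: powR_ge0.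
  apply: ge0_ler_powR => //; first exact: ltW.
    by rewrite nnegrE powR_ge0.
  by rewrite nnegrE (le_trans _ hs2) // powR_ge0.
have cont : {within `[s1, s2], continuous f}.
  apply: derivable_within_continuous => z; rewrite in_itv /= => /andP[s1z _].
  apply: derivable_sum => i.
  by have [] := is_derive1_powR (c i) (lt_le_trans s10 s1z).
have mm : Num.min (f s1) (f s2) <= P <= Num.max (f s1) (f s2).
  by rewrite ge_min fs1 le_max fs2 orbT.
have [s sI fs] := IVT s12 cont mm.
exists s; last by rewrite -fE.
by move: sI; rewrite in_itv /= => /andP[s1s _]; apply: lt_le_trans s1s.
Qed.

Lemma key_lt {R : realType} {n : nat} {P : R} {a x y : 'I_n -> R} {lam : R} :
  (forall r, 0 < a r) -> (forall r, 0 < x r) -> \sum_(r < n) x r = P ->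
  (forall r, x r `^ (- a r) = lam) -> feasible P y ->
  (exists r, y r != x r) -> total_util a y < total_util a x.
Proof.
move=> a0 x0 sx hl [y0 sy] [r0 ne].
rewrite -subr_lt0.
have : total_util a y - total_util a x < \sum_(r < n) lam * (y r - x r).
  rewrite /total_util -sumrB (bigD1 r0) //= [X in _ < X](bigD1 r0) //=.
  apply: ltr_leD; first by rewrite -(hl r0); apply: tangent_lt; [exact: a0|exact: x0|exact: y0|by rewrite eq_sym].
  apply: ler_sum => i _; have [->|ne'] := eqVneq (y i) (x i).
    by rewrite !subrr mulr0.
  by rewrite -(hl i); apply: ltW; apply: tangent_lt; [exact: a0|exact: x0|exact: y0|by rewrite eq_sym].
move/lt_le_trans; apply.
by rewrite -mulr_sumr sumrB sx mulr_ge0_le0 ?subr_le0 // -(hl r0) powR_ge0.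
Qed.

Lemma key_le {R : realType} {n : nat} {P : R} {a x y : 'I_n -> R} {lam : R} :
  (forall r, 0 < a r) -> (forall r, 0 < x r) -> \sum_(r < n) x r = P ->
  (forall r, x r `^ (- a r) = lam) -> feasible P y ->
  total_util a y <= total_util a x.
Proof.
move=> a0 x0 sx hl fy.
case: (pselect (exists r, y r != x r)) => [h|h].
  exact: ltW (key_lt a0 x0 sx hl fy h).
have -> : y = x.
  apply/funext => r; apply/eqP; apply/negPn/negP => ne; apply: h; exists r.
  exact: ne.
exact: lexx.
Qed.

Theorem theorem2 (R : realType) (n : nat) (P b : R) (atil : 'I_n -> R)
    (xstar : ('I_n -> R) -> ('I_n -> R)) (astar : 'I_n -> R) :
  (0 < n)%N -> 0 < P -> 0 < b -> (forall r, 0 < atil r) ->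
  (forall a, param_set b a -> is_opt_alloc P a (xstar a)) ->
  param_set b astar ->
  (forall a, param_set b a -> total_util atil (xstar a) <= total_util atil (xstar astar)) ->
  is_opt_alloc P atil (xstar astar).
Proof.
move=> n0 P0 b0 at0 hopt astar_in hmax.
have [s s0 hs] := @exists_root R n (fun r => (atil r)^-1) P n0 P0
  (fun r => (eqbRL (invr_gt0 _) (at0 r))).
pose xt := fun r => s `^ (atil r)^-1.
have xt0 : forall r, 0 < xt r by move=> r; exact: powR_gt0.
pose S := \sum_(r < n) atil r.
have at_le : forall r, atil r <= S.
  move=> r; rewrite /S (bigD1 r) //= lerDl.
  by apply: sumr_ge0 => i _; apply: ltW.
have S0 : 0 < S by apply: lt_le_trans (at_le (Ordinal n0)).
pose t := b / S.
have t0 : 0 < t by rewrite divr_gt0.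
pose a := fun r => t * atil r.
have pa : param_set b a.
  move=> r; apply/andP; split; first by rewrite mulr_gt0.
  by rewrite /a /t mulrAC ler_pdivrMr // ler_pM2l.
have xa : forall r, xt r `^ (- a r) = s `^ (- t).
  move=> r; rewrite /xt -powRrM; congr (_ `^ _).
  by rewrite /a mulrN mulrCA mulVf ?gt_eqF ?mulr1.
have xta : forall r, xt r `^ (- atil r) = s `^ (- 1).
  move=> r; rewrite /xt -powRrM; congr (_ `^ _).
  by rewrite mulrN mulVf ?gt_eqF.
have feas_xt : feasible P xt by split => //; rewrite -hs.
have [[xs0 xsum] xsopt] := hopt a pa.
have a0 : forall r, 0 < a r by move=> r; have /andP[] := pa r.
have eqf : xstar a = xt.
  apply/funext => r; apply/eqP; apply/negPn/negP => ne.
  have := key_lt a0 xt0 hs xa (conj xs0 xsum) (ex_intro _ r ne).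
  by rewrite ltNge (xsopt xt feas_xt).
split; first exact: (hopt astar astar_in).1.
move=> y fy; apply: le_trans (key_le at0 xt0 hs xta fy) _.
by rewrite -eqf; exact: hmax a pa.
Qed.
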